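(* Let $n$ be a natural number and let $h=F_{6n-1}$, $k=F_{6n+1}$, where $F_m$ is the $m$-th Fibonacci number. Suppose $h,k$ are positive integers with $\gcd(h,k)=1$ and $\{h,k\}$ is a symmetric pair. Then $$kB_{1}(h,k)+hB_{1}(k,h)=\frac{h^{2}-h-k+k^{2}}{2}-hk+1.$$
   Context: The Fibonacci numbers are given by $F_0=0$, $F_1=1$, $F_{m+1}=F_m+F_{m-1}$ (equivalently $\frac{x}{1-x-x^2}=\sum_{m\ge0}F_mx^m$). $[x]$ denotes the greatest integer $\le x$, and $((x))=x-[x]-\tfrac12$ if $x\notin\mathbb{Z}$, $((x))=0$ if $x\in\mathbb{Z}$. The Dedekind sum is $s(a,b)=\sum_{j=1}^{b-1}\left(\left(\frac{aj}{b}\right)\right)\left(\left(\frac{j}{b}\right)\right)$ for integers $a$ and $b>0$; a pair $\{h,k\}$ of positive integers is called a symmetric pair if $s(h,k)=s(k,h)$. For coprime positive integers $a,b$, $$B_{1}(a,b)=\sum_{j=1}^{b-1}(-1)^{j+\left[\frac{aj}{b}\right]}\left[\frac{aj}{b}\right].$$ *)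

(* Defs.v *)
From mathcomp Require Import all_boot all_order all_algebra.
Set Implicit Arguments. Unset Strict Implicit. Unset Printing Implicit Defensive.
Import Order.TTheory GRing.Theory Num.Theory.
Local Open Scope ring_scope.

Fixpoint fib (m : nat) : nat :=
  match m with
  | 0 => 0%N
  | 1 => 1%N
  | (m'.+1 as m1).+1 => (fib m1 + fib m')%N
  end.

Definition saw (x : rat) : rat :=
  if x \is a Num.int then 0 else x - (Num.floor x)%:~R - 1 / 2.

Definition dedekind_sum (a : int) (b : nat) : rat :=
  \sum_(1 <= j < b) saw ((a * j%:Z)%:~R / b%:R) * saw (j%:R / b%:R).

Definition symmetric_pair (h k : nat) : Prop :=
  dedekind_sum h%:Z k = dedekind_sum k%:Z h.

Definition B1 (a b : nat) : int :=
  \sum_(1 <= j < b)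
     let q : int := Num.floor ((a * j)%:R / b%:R : rat) in
     (-1) ^ (j%:Z + q) * q.

(* Main.v *)
Require Import Defs.
From mathcomp Require Import all_boot all_order all_algebra.
From mathcomp Require Import zify ring lra.
Import Order.TTheory GRing.Theory Num.Theory.
Local Open Scope ring_scope.

Definition e (x : nat) : int := (-1) ^+ x.

Lemma eE x : e x = (-1) ^+ odd x.
Proof. by rewrite /e signr_odd. Qed.

Lemma eS x : e x.+1 = - e x.
Proof. by rewrite /e exprS mulN1r. Qed.

Lemma e_odd x y : odd x = odd y -> e x = e y.
Proof. by rewrite !eE => ->. Qed.

Lemma floor_nat_div (a b : nat) : (0 < b)%N ->
  Num.floor ((a%:R / b%:R) : rat) = (a %/ b)%:Z.
Proof.
move=> b0; apply: floor_def.
have bp : (0 : rat) < b%:R by rewrite ltr0n.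
rewrite -[((a %/ b)%:Z)%:~R]/(((a %/ b)%:Z)%:~R : rat) intrD !pmulrn.
rewrite ler_pdivlMr // ltr_pdivrMr // -!natrM -natrD -natrM.
have -> : (a%:~R : rat) = a%:R by [].
rewrite ler_nat ltr_nat; apply/andP; split.
  by rewrite {2}(divn_eq a b) leq_addr.
by rewrite {1}(divn_eq a b) mulnDl mul1n ltn_add2l ltn_pmod.
Qed.

Definition Bn (a b : nat) : int :=
  \sum_(0 <= j < b) e (j + (a * j) %/ b) * ((a * j) %/ b)%:Z.

Lemma B1E a b : (0 < b)%N -> B1 a b = Bn a b.
Proof.
move=> b0; rewrite /B1 /Bn [in RHS]big_ltn // muln0 div0n mulr0 add0r.
apply: eq_big_nat => j _ /=.
rewrite -[(a * j)%:R]/(((a * j)%N)%:R) floor_nat_div //.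

Qed.


Lemma perm_sum (a b : nat) (F : nat -> int) : (0 < b)%N -> coprime a b ->
  \sum_(0 <= j < b) F ((a * j) %% b)%N = \sum_(0 <= j < b) F j.
Proof.
move=> b0 cop; rewrite !big_mkord.
pose f (j : 'I_b) : 'I_b := Ordinal (ltn_pmod (a * j) b0).
have inj : injective f.
  move=> i j /(congr1 val) /= /eqP.
  wlog le : i j / (i <= j)%N.
    move=> H; case: (leqP i j) => [/H//|/ltnW lt E]; apply/esym/H => //.
    by rewrite eq_sym.
  rewrite eq_sym eqn_mod_dvd ?leq_mul2l ?le ?orbT // -mulnBr Gauss_dvdr.
    move=> d; apply/val_inj/eqP => /=; rewrite eqn_leq le /=.
    have : (j - i < b)%N by have := ltn_ord j; lia.
    case: (posnP (j - i)) => [z|pos]; first lia.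
    have := dvdn_leq pos d; lia.
  by rewrite coprime_sym.
by rewrite [RHS](reindex_inj inj).
Qed.

Lemma sum_e_odd m : \sum_(0 <= r < m.*2.+1) e r = 1.
Proof.
elim: m => [|m IH]; first by rewrite big_nat1.
rewrite doubleS big_nat_recr //= big_nat_recr //= IH !eS; ring.
Qed.

Lemma sum_re_odd m : 2 * \sum_(0 <= r < m.*2.+1) r%:Z * e r = m.*2%:Z.
Proof.
elim: m => [|m IH]; first by rewrite big_nat1 mulr0.
rewrite doubleS big_nat_recr //= big_nat_recr //= !mulrDr IH !eS /e -signr_odd odd_double /= expr0.
have h1 : ((m.*2.+1)%N : int) = (m.*2)%N + 1 by rewrite -addn1 PoszD.
have h2 : ((m.*2.+2)%N : int) = (m.*2)%N + 2 by rewrite -addn2 PoszD.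
rewrite h1 h2; ring.
Qed.


Definition A (a b : nat) : int := \sum_(0 <= j < b) j%:Z * e ((a * j) %% b)%N.

Lemma parity_qr a b j : odd a -> odd b ->
  e (j + (a * j) %/ b)%N = e ((a * j) %% b)%N.
Proof.
move=> oa ob; apply: e_odd.
have := congr1 odd (divn_eq (a * j) b).
rewrite oddD !oddM oa ob /= andbT oddD.
case: (odd j); case: (odd ((a * j) %/ b)); by case: (odd ((a * j) %% b)).
Qed.

Lemma sum_re_oddb b : odd b -> 2 * \sum_(0 <= r < b) r%:Z * e r = (b%:Z - 1).
Proof.
move=> ob; have E : b = (b./2).*2.+1.
  by rewrite -[in LHS](odd_double_half b) ob add1n.
by rewrite [in LHS]E sum_re_odd [in RHS]E -addn1 PoszD addrK.
Qed.

Lemma L2 a b : odd a -> odd b -> coprime a b -> (0 < b)%N ->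
  2 * b%:Z * Bn a b = 2 * a%:Z * A a b - (b%:Z - 1).
Proof.
move=> oa ob cop b0.
have step : b%:Z * Bn a b =
   a%:Z * A a b - \sum_(0 <= j < b) ((a * j) %% b)%N%:Z * e ((a * j) %% b)%N.
  rewrite /Bn /A mulr_sumr mulr_sumr -sumrB; apply: eq_big_nat => j _.
  rewrite parity_qr //.
  have D : (a * j)%N%:Z = ((a * j) %/ b)%N%:Z * b%:Z + ((a * j) %% b)%N%:Z.
    by rewrite -PoszM -PoszD -divn_eq.
  have D' : (a * j)%N%:Z = a%:Z * j%:Z by rewrite PoszM.
  have : ((a * j) %/ b)%N%:Z * b%:Z = a%:Z * j%:Z - ((a * j) %% b)%N%:Z.
    by rewrite -D' D addrK.
  move=> H; rewrite mulrCA [b%:Z * _]mulrC H; ring.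
rewrite -mulrA step mulrBr mulrA.
rewrite (@perm_sum a b (fun r => r%:Z * e r)) //.
by rewrite sum_re_oddb.
Qed.


Section L1.
Variables h k : nat.
Hypotheses (oh : odd h) (ok : odd k) (cop : coprime h k) (h0 : (0 < h)%N) (k0 : (0 < k)%N).

Definition ac (q : nat) : nat := ((q * k + (h - 1)) %/ h)%N.

Lemma ac_le q j : (ac q <= j)%N = (q * k <= j * h)%N.
Proof.
rewrite /ac leqNgt -[(j < _)%N]/(j.+1 <= _)%N leq_divRL // mulSn.
apply/negP/idP; lia.
Qed.

Lemma ac0 : ac 0 = 0%N.
Proof. by rewrite /ac mul0n add0n divn_small //; lia. Qed.

Lemma ach : ac h = k.
Proof. by rewrite /ac mulnC divnMDl // divn_small ?addn0 //; lia. Qed.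

Lemma ac_mono q q' : (q <= q')%N -> (ac q <= ac q')%N.
Proof. by move=> le; rewrite /ac leq_div2r // leq_add2r leq_mul2r le orbT. Qed.

Lemma ac_q q j : (ac q <= j < ac q.+1)%N -> ((h * j) %/ k)%N = q.
Proof.
case/andP; rewrite ac_le ltnNge ac_le mulSn => l1 /negP l2.
apply/eqP; rewrite eqn_leq; apply/andP; split.
  rewrite -ltnS ltn_divLR //; lia.
rewrite leq_divRL //; lia.
Qed.


Lemma group_sum (F : nat -> int) Q :
  \sum_(0 <= j < ac Q) F j = \sum_(0 <= q < Q) \sum_(ac q <= j < ac q.+1) F j.
Proof.
elim: Q => [|Q IH]; first by rewrite ac0 !big_geq.
rewrite big_nat_recr //= -IH (big_cat_nat _ (n := ac Q)) //.
exact: ac_mono.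
Qed.

Lemma alt_sum a b : (a <= b)%N -> 2 * \sum_(a <= j < b) e j = e a - e b.
Proof.
move=> /subnK <-; elim: (b - a)%N => [|m IH]; first by rewrite add0n big_geq // mulr0 subrr.
rewrite addSn big_nat_recr ?leq_addl //= mulrDr IH eS; ring.
Qed.

Lemma tele (g : nat -> int) H :
  \sum_(0 <= q < H) q%:Z * (g q + g q.+1) =
  \sum_(0 <= q < H) (2 * q%:Z - 1) * g q + (H%:Z - 1) * g H + g 0%N.
Proof.
elim: H => [|H IH]; first by rewrite !big_geq // mulN1r; ring.
rewrite !big_nat_recr //= IH.
have -> : (H.+1)%N%:Z = H%:Z + 1 by rewrite -addn1 PoszD.
ring.
Qed.

Lemma g_val q : (0 < q < h)%N -> e q * e (ac q) = - e ((k * q) %% h)%N.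
Proof.
case/andP => q0 qh.
set s := ((k * q) %% h)%N; set f := ((k * q) %/ h)%N.
have s0 : (0 < s)%N.
  rewrite lt0n; apply/negP => /eqP E.
  have : (h %| k * q)%N by rewrite /dvdn -/s E.
  rewrite Gauss_dvdr // => /(dvdn_leq q0); lia.
have Hac : ac q = f.+1.
  rewrite /ac mulnC {1}(divn_eq (k * q) h) -/s -/f.
  have -> : (f * h + s + (h - 1) = f.+1 * h + (s - 1))%N.
    rewrite mulSn; lia.
  rewrite divnMDl // divn_small ?addn0 //; have := ltn_pmod (k * q) h0; lia.
rewrite Hac eS mulrN; congr (- _).
have := congr1 odd (divn_eq (k * q) h); rewrite -/s -/f.
rewrite oddD !oddM ok oh /= andbT => E.
rewrite /e -exprD -/(e (q + f)%N); apply: e_odd; rewrite oddD E.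
by case: (odd q); case: (odd f); case: (odd s).
Qed.


Lemma e_odd1 x : odd x -> e x = -1.
Proof. by move=> o; rewrite eE o. Qed.

Lemma L1 : 2 * Bn h k = (h%:Z - 1) - 2 * A k h.
Proof.
pose g q := e q * e (ac q).
have step1 : 2 * Bn h k =
    \sum_(0 <= q < h) q%:Z * (g q + g q.+1).
  have -> : Bn h k = \sum_(0 <= j < ac h) e (j + (h * j) %/ k)%N * ((h * j) %/ k)%N%:Z.
    by rewrite ach.
  rewrite group_sum mulr_sumr; apply: eq_big_nat => q /andP [_ qh].
  have -> : \sum_(ac q <= j < ac q.+1) e (j + (h * j) %/ k)%N * ((h * j) %/ k)%N%:Z
          = q%:Z * e q * \sum_(ac q <= j < ac q.+1) e j.
    rewrite mulr_sumr; apply: eq_big_nat => j Hj; rewrite (ac_q _ _ Hj).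
    rewrite /e exprD; ring.
  rewrite mulrCA alt_sum; last exact: ac_mono.
  rewrite /g eS; ring.
have sum_s : \sum_(1 <= q < h) e ((k * q) %% h)%N = 0.
  have cop2 : coprime k h by rewrite coprime_sym.
  have := @perm_sum k h e h0 cop2.
  have Eh : h = (h./2).*2.+1 by rewrite -[in LHS](odd_double_half h) oh add1n.
  have T : \sum_(0 <= j < h) e j = 1 by rewrite {1}Eh sum_e_odd.
  rewrite T big_ltn // muln0 mod0n /e expr0 -/e => P.
  by apply: (addrI 1); rewrite addr0.
have Adef : A k h = \sum_(1 <= q < h) q%:Z * e ((k * q) %% h)%N.
  by rewrite /A big_ltn // mul0r add0r.
rewrite step1 tele.
have -> : g h = 1 by rewrite /g ach !e_odd1.
have -> : g 0%N = 1 by rewrite /g ac0 /e expr0 mulr1.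
rewrite big_ltn // /g ac0 /e expr0 mulr1 -/e.
have -> : \sum_(1 <= i < h) (2 * i%:Z - 1) * (e i * e (ac i))
        = \sum_(1 <= i < h) (- 2 * (i%:Z * e ((k * i) %% h)%N) + e ((k * i) %% h)%N).
  apply: eq_big_nat => i /andP [i0 ih].
  rewrite g_val ?i0 //; ring.
rewrite big_split /= sum_s -mulr_sumr -Adef; ring.
Qed.

End L1.


Lemma fibSS m : fib m.+2 = (fib m.+1 + fib m)%N.
Proof. by []. Qed.

Lemma cassini m : (fib m)%:Z * (fib m.+2)%:Z - (fib m.+1)%:Z ^+ 2 = (-1) ^+ m.+1.
Proof.
elim: m => [|m IH]; first by [].
rewrite [(-1) ^+ _]exprS -IH fibSS [fib m.+2]fibSS !PoszD; ring.
Qed.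

Lemma fib_parity m : [&& ~~ odd (fib (3 * m)), odd (fib (3 * m).+1) & odd (fib (3 * m).+2)].
Proof.
elim: m => [|m /and3P [a b c]]; first by [].
have -> : (3 * m.+1 = (3 * m).+3)%N by rewrite mulnS addnC addn3.
by rewrite !fibSS !oddD (negbTE a) b.
Qed.

Theorem theorem25 (n h k : nat) :
  (0 < n)%N ->
  h = fib (6 * n - 1) -> k = fib (6 * n + 1) ->
  (0 < h)%N -> (0 < k)%N -> coprime h k ->
  symmetric_pair h k ->
  (k%:R * (B1 h k)%:~R + h%:R * (B1 k h)%:~R : rat)
    = ((h%:R ^+ 2 - h%:R - k%:R + k%:R ^+ 2) / 2 - h%:R * k%:R + 1).
Proof.
move=> n0 Eh Ek h0 k0 cop _.
set p := (6 * n - 2)%N.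
have Eh' : h = fib p.+1 by rewrite Eh; congr fib; rewrite /p; lia.
have Ek' : k = fib p.+3 by rewrite Ek; congr fib; rewrite /p; lia.
have oh : odd h.
  have := fib_parity (2 * n - 1); case/and3P => _ _.
  have -> : ((3 * (2 * n - 1)).+2 = 6 * n - 1)%N by lia.
  by rewrite Eh.
have ok : odd k.
  have := fib_parity (2 * n); case/and3P => _ + _.
  have -> : ((3 * (2 * n)).+1 = 6 * n + 1)%N by lia.
  by rewrite Ek.
have pev : odd p.+2 = false.
  have -> : p.+2 = (3 * n).*2 by rewrite /p -muln2; lia.
  by rewrite odd_double.
have cas := cassini p.+1.
rewrite -signr_odd pev expr0 -Eh' -Ek' in cas.
have fk : k = (fib p.+2 + h)%N by rewrite Ek' Eh' fibSS.
set f := fib p.+2 in fk cas.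
have E1 := L1 h k oh ok cop h0 k0.
have E2 := L2 k h ok oh (etrans (coprime_sym k h) cop) h0.
rewrite !B1E //.
have I : 2 * (k%:Z * Bn h k + h%:Z * Bn k h) = (k%:Z - 1) * (h%:Z - 1).
  rewrite mulrDr mulrCA E1 mulrA E2; ring.
have Rl : h%:Z ^+ 2 + k%:Z ^+ 2 + 1 = 3 * h%:Z * k%:Z.
  rewrite fk PoszD in cas *; rewrite -[1 in LHS]cas; ring.
have Iq := congr1 (fun z : int => z%:~R : rat) I.
have Rq := congr1 (fun z : int => z%:~R : rat) Rl.
rewrite /= !expr2 !(intrD, intrM, intrB, intrN, pmulrn) in Iq Rq.
rewrite !expr2.
set X := (Bn h k)%:~R in Iq *; set Y := (Bn k h)%:~R in Iq *.
have eh : ((h : int)%:~R : rat) = h%:R by [].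
have ek : ((k : int)%:~R : rat) = k%:R by [].
have e1 : ((1 : int)%:~R : rat) = 1 by [].
rewrite eh ek e1 in Iq Rq.
set hr := (h%:R : rat) in Iq Rq *; set kr := (k%:R : rat) in Iq Rq *.
lra.
Qed.
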